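(* In the discrete first-price auction (under either tie rule), let $\beta$ be a bidding function used by some player in an equilibrium. Then for any $v,v'\in X$ with $v'>v$, we have $\beta(v')\ge\beta(v)$.
   Context: Model. There are $n\ge 2$ risk-neutral bidders competing for one indivisible object. Normalise the grid so that values and bids lie in $X=\{0,1,2,\dots,x\}$ for some $x\in\mathbb N$. Each bidder $i$ privately learns a value $v_i\in X$; values are drawn independently across bidders and every element of $X$ has strictly positive probability. Each bidder submits a bid $b_i\in X$. A (pure) strategy of bidder $i$ is a bidding function $\beta_i:X\to X$. Tie rules: in the model without ties, bidder $i$ wins iff $b_i>b_j$ for all $j\neq i$ (if the highest bid is tied, nobody wins); in the model with ties, if $m$ bidders submit the highest bid, each of them wins with probability $1/m$. In the first-price auction, a bidder with value $v_i$ bidding $b_i$ gets expected payoff $(v_i-b_i)\Pr(i\text{ wins})$. An equilibrium is a profile of bidding functions such that each bidder's bidding function maximises their expected payoff given the others' bidding functions (a pure-strategy Bayes–Nash equilibrium) and such that no bidder uses a weakly dominated bidding function (a bidding function is weakly dominated if some other bidding function yields at least as high expected payoff against every profile of opponents' bidding functions, and strictly higher against some). *)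

(* Defs.v *)
From mathcomp Require Import all_boot all_order all_algebra.
Set Implicit Arguments. Unset Strict Implicit. Unset Printing Implicit Defensive.
Import Order.TTheory GRing.Theory Num.Theory.
Local Open Scope ring_scope.

(* Grid X = {0,...,x} is 'I_x.+1; bidders are 'I_n. *)
Inductive tie_rule := NoTies | WithTies.

Definition profile (n x : nat) := 'I_n -> ('I_x.+1 -> 'I_x.+1).

Definition win_share (R : realFieldType) (tr : tie_rule) (n x : nat)
  (i : 'I_n) (b : 'I_n -> 'I_x.+1) : R :=
  match tr with
  | NoTies =>
      if [forall j : 'I_n, (j != i) ==> (nat_of_ord (b j) < nat_of_ord (b i))%N]
      then 1 else 0
  | WithTies =>
      if [forall j : 'I_n, (nat_of_ord (b j) <= nat_of_ord (b i))%N]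
      then (#|[set j : 'I_n | b j == b i]|%:R)^-1 else 0
  end.

Definition prob_vals (R : realFieldType) (n x : nat) (p : 'I_n -> 'I_x.+1 -> R)
  (w : {ffun 'I_n -> 'I_x.+1}) : R := \prod_(j : 'I_n) p j (w j).

Definition full_support_dists (R : realFieldType) (n x : nat)
  (p : 'I_n -> 'I_x.+1 -> R) : Prop :=
  (forall i v, 0 < p i v) /\ (forall i, \sum_(v : 'I_x.+1) p i v = 1).

Definition payoff (R : realFieldType) (tr : tie_rule) (n x : nat)
  (p : 'I_n -> 'I_x.+1 -> R) (s : profile n x) (i : 'I_n) : R :=
  \sum_(w : {ffun 'I_n -> 'I_x.+1})
     prob_vals p w *
     (((nat_of_ord (w i))%:R - (nat_of_ord (s i (w i)))%:R) *
      win_share R tr i (fun j => s j (w j))).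

Definition upd (n x : nat) (s : profile n x) (i : 'I_n)
  (beta : 'I_x.+1 -> 'I_x.+1) : profile n x :=
  fun j => if j == i then beta else s j.

Definition best_response (R : realFieldType) (tr : tie_rule) (n x : nat)
  (p : 'I_n -> 'I_x.+1 -> R) (s : profile n x) (i : 'I_n) : Prop :=
  forall beta' : 'I_x.+1 -> 'I_x.+1,
    payoff tr p (upd s i beta') i <= payoff tr p s i.

(* beta is weakly dominated for bidder i (opponent profiles t; t i is irrelevant). *)
Definition weakly_dominated (R : realFieldType) (tr : tie_rule) (n x : nat)
  (p : 'I_n -> 'I_x.+1 -> R) (i : 'I_n) (beta : 'I_x.+1 -> 'I_x.+1) : Prop :=
  exists beta' : 'I_x.+1 -> 'I_x.+1,
    (forall t : profile n x, payoff tr p (upd t i beta) i <= payoff tr p (upd t i beta') i)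
    /\ (exists t : profile n x, payoff tr p (upd t i beta) i < payoff tr p (upd t i beta') i).

Definition equilibrium (R : realFieldType) (tr : tie_rule) (n x : nat)
  (p : 'I_n -> 'I_x.+1 -> R) (s : profile n x) : Prop :=
  forall i : 'I_n, best_response tr p s i /\ ~ weakly_dominated tr p i (s i).

(* Main.v *)
Require Import Defs.
From mathcomp Require Import all_boot all_order all_algebra.
Import Order.TTheory GRing.Theory Num.Theory.
From mathcomp Require Import ring lra.
From Stdlib Require Import FunctionalExtensionality.

Set Implicit Arguments. Unset Strict Implicit.
Local Open Scope ring_scope.

Lemma win_share_ge0 (R : realFieldType) tr n x (i : 'I_n) (b : 'I_n -> 'I_x.+1) :
  0 <= win_share R tr i b.
Proof. by case: tr => /=; case: ifP; rewrite ?invr_ge0 ?ler0n ?ler01. Qed.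

Lemma win_share_mono (R : realFieldType) tr n x (i : 'I_n) (b b' : 'I_n -> 'I_x.+1) :
  (nat_of_ord (b i) < nat_of_ord (b' i))%N -> (forall j, j != i -> b j = b' j) ->
  win_share R tr i b <= win_share R tr i b'.
Proof.
move=> hlt hb; case: tr => /=.
- case: ifP => [/forallP H|_]; last by case: ifP.
  rewrite ifT //; apply/forallP => j; apply/implyP => ji.
  have h := implyP (H j) ji; rewrite -(hb j ji); exact: ltn_trans h hlt.
- case: ifP => [/forallP H|_]; last by case: ifP; rewrite ?invr_ge0 ?ler0n.
  have C : [forall j, (nat_of_ord (b' j) <= nat_of_ord (b' i))%N].
    apply/forallP => j; case: (eqVneq j i) => [->//|ji].
    rewrite -(hb j ji); exact: leq_trans (H j) (ltnW hlt).
  rewrite C.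
  have -> : [set j | b' j == b' i] = [set i].
    apply/setP => j; rewrite !inE; case: (eqVneq j i) => [->|ji]; first by rewrite eqxx.
    apply/negbTE; rewrite -(hb j ji); apply/negP => /eqP E.
    by move: (H j); rewrite E leqNgt hlt.
  rewrite cards1 invr1.
  have cpos : (0 < #|[set j | b j == b i]|)%N by apply/card_gt0P; exists i; rewrite inE.
  by rewrite invf_le1 ?ler1n // ltr0n.
Qed.

Lemma prob_split (R : realFieldType) n x (p : 'I_n -> 'I_x.+1 -> R) (w : {ffun 'I_n -> 'I_x.+1}) i :
  prob_vals p w = p i (w i) * \prod_(k | k != i) p k (w k).
Proof. by rewrite /prob_vals (bigD1 i). Qed.

Lemma prob_gt0 (R : realFieldType) n x (p : 'I_n -> 'I_x.+1 -> R) w :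
  full_support_dists p -> 0 < prob_vals p w.
Proof. by move=> [hp _]; apply: prodr_gt0 => k _; apply: hp. Qed.

Definition Qf (R : realFieldType) tr n x (p : 'I_n -> 'I_x.+1 -> R) (t : profile n x) j v c : R :=
  \sum_(w : {ffun 'I_n -> 'I_x.+1} | w j == v)
     prob_vals p w * win_share R tr j (fun k => if k == j then c else t k (w k)).

Definition Af (R : realFieldType) tr n x (p : 'I_n -> 'I_x.+1 -> R) (t : profile n x) j beta v : R :=
  \sum_(w : {ffun 'I_n -> 'I_x.+1} | w j != v)
     prob_vals p w * (((nat_of_ord (w j))%:R - (nat_of_ord (beta (w j)))%:R) *
        win_share R tr j (fun k => upd t j beta k (w k))).

Lemma payoff_split (R : realFieldType) tr n x (p : 'I_n -> 'I_x.+1 -> R) (t : profile n x) j beta v :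
  payoff tr p (upd t j beta) j =
  Af tr p t j beta v + ((nat_of_ord v)%:R - (nat_of_ord (beta v))%:R) * Qf tr p t j v (beta v).
Proof.
rewrite /payoff (bigID (fun w : {ffun 'I_n -> 'I_x.+1} => w j != v)) /=; congr (_ + _).
  by rewrite /Af; apply: eq_bigr => w _; rewrite {1}/upd eqxx.
rewrite /Qf mulr_sumr; rewrite (eq_bigl (fun w : {ffun 'I_n -> 'I_x.+1} => w j == v)); last by move=> w; rewrite negbK.
apply: eq_bigr => w /eqP wj.
rewrite {1 2}/upd eqxx.
rewrite wj mulrCA; congr (_ * (_ * _)); congr (win_share _ _ _).
apply: functional_extensionality => k; rewrite /upd; case: (eqVneq k j) => [->|//].
by rewrite wj.
Qed.

Lemma Af_ext (R : realFieldType) tr n x (p : 'I_n -> 'I_x.+1 -> R) (t : profile n x) j beta beta' v :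
  (forall z, z != v -> beta z = beta' z) -> Af tr p t j beta v = Af tr p t j beta' v.
Proof.
move=> hb; apply: eq_bigr => w wj; rewrite (hb _ wj); congr (_ * (_ * _)).
congr (win_share _ _ _); apply: functional_extensionality => k; rewrite /upd.
by case: (eqVneq k j) => [->|//]; rewrite hb.
Qed.

Lemma Qf_ge0 (R : realFieldType) tr n x (p : 'I_n -> 'I_x.+1 -> R) (t : profile n x) j v c :
  full_support_dists p -> 0 <= Qf tr p t j v c.
Proof.
move=> hp; apply: sumr_ge0 => w _; apply: mulr_ge0; last exact: win_share_ge0.
exact: ltW (prob_gt0 w hp).
Qed.

Lemma Qf_mono (R : realFieldType) tr n x (p : 'I_n -> 'I_x.+1 -> R) (t : profile n x) j v
   (c c' : 'I_x.+1) :
  full_support_dists p -> (nat_of_ord c < nat_of_ord c')%N -> Qf tr p t j v c <= Qf tr p t j v c'.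
Proof.
move=> hp hc; apply: ler_sum => w _; apply: ler_wpM2l; first exact: ltW (prob_gt0 w hp).
apply: win_share_mono; first by rewrite !eqxx.
by move=> k /negbTE ->.
Qed.

Lemma Qf_gt0 (R : realFieldType) tr n x (p : 'I_n -> 'I_x.+1 -> R) (t : profile n x) j v
   (c : 'I_x.+1) :
  full_support_dists p -> (forall k, t k ord0 = ord0) -> (0 < nat_of_ord c)%N -> 0 < Qf tr p t j v c.
Proof.
move=> hp ht hc.
pose w0 : {ffun 'I_n -> 'I_x.+1} := [ffun k => if k == j then v else ord0].
have w0j : w0 j == v by rewrite ffunE eqxx.
rewrite /Qf (bigD1 w0) //=.
apply: (@lt_le_trans _ _ (prob_vals p w0 * win_share R tr j
   (fun k => if k == j then c else t k (w0 k)) + 0)); last first.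
  rewrite lerD2l; apply: sumr_ge0 => w _; apply: mulr_ge0; last exact: win_share_ge0.
  exact: ltW (prob_gt0 w hp).
rewrite addr0; apply: mulr_gt0; first exact: prob_gt0.
case: tr => /=.
- rewrite ifT ?ltr01 //; apply/forallP => k; apply/implyP => kj.
  by rewrite (negbTE kj) ffunE (negbTE kj) ht eqxx.
- rewrite ifT; last first.
    apply/forallP => k /=; rewrite eqxx; case: ifP => [//|/negbT kj].
    by rewrite ffunE (negbTE kj) ht.
  rewrite eqxx invr_gt0 ltr0n; apply/card_gt0P; exists j; by rewrite inE !eqxx.
Qed.

Lemma Qf_scale (R : realFieldType) tr n x (p : 'I_n -> 'I_x.+1 -> R) (t : profile n x) j v v' c :
  Qf tr p t j v' c * p j v = Qf tr p t j v c * p j v'.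
Proof.
rewrite /Qf !mulr_suml.
pose h u (w : {ffun 'I_n -> 'I_x.+1}) : {ffun 'I_n -> 'I_x.+1} :=
  [ffun k => if k == j then u else w k].
rewrite (reindex_onto (h v') (h v)); last first.
  move=> w /eqP wj; apply/ffunP => k; rewrite !ffunE.
  by case: (eqVneq k j) => [->|//]; rewrite wj.
rewrite (eq_bigl (fun w : {ffun 'I_n -> 'I_x.+1} => w j == v)); last first.
  move=> w; rewrite ffunE eqxx eqxx /=; apply/eqP/eqP => [<-|wj].
    by rewrite ffunE eqxx.
  apply/ffunP => k; rewrite !ffunE; case: (eqVneq k j) => [->|//]; by rewrite wj.
apply: eq_bigr => w /eqP wj.
have -> : win_share R tr j (fun k => if k == j then c else t k (h v' w k)) =
          win_share R tr j (fun k => if k == j then c else t k (w k)).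
  congr (win_share _ _ _); apply: functional_extensionality => k.
  by rewrite ffunE; case: (k == j).
rewrite (prob_split _ _ j) (prob_split p w j) ffunE eqxx wj.
have -> : \prod_(k | k != j) p k (h v' w k) = \prod_(k | k != j) p k (w k).
  by apply: eq_bigr => k kj; rewrite ffunE (negbTE kj).
ring.
Qed.

Lemma zero_bid (R : realFieldType) tr n x (p : 'I_n -> 'I_x.+1 -> R) (s : profile n x) :
  full_support_dists p -> equilibrium tr p s -> forall k, s k ord0 = ord0.
Proof.
move=> hp heq k; apply/eqP; apply/negPn/negP => hne; apply: (heq k).2.
pose beta' := fun z : 'I_x.+1 => if z == ord0 then ord0 else s k z.
have hz : ((nat_of_ord (@ord0 x))%:R : R) = 0 by [].
have hA : forall t : profile n x, Af tr p t k (s k) ord0 = Af tr p t k beta' ord0.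
  by move=> t; apply: Af_ext => z /negbTE; rewrite /beta' => ->.
have hc : (0 < nat_of_ord (s k ord0))%N.
  by rewrite lt0n; apply: contra hne => /eqP E; apply/eqP/val_inj.
exists beta'; split.
- move=> t; rewrite !(payoff_split _ _ _ _ _ ord0) hA lerD2l /beta' eqxx hz subrr mul0r.
  rewrite sub0r mulNr oppr_le0; apply: mulr_ge0; first by rewrite ler0n.
  exact: Qf_ge0.
- exists (fun _ _ => ord0).
  rewrite !(payoff_split _ _ _ _ _ ord0) hA ltrD2l /beta' eqxx hz subrr mul0r.
  rewrite sub0r mulNr oppr_lt0; apply: mulr_gt0; first by rewrite ltr0n.
  by apply: Qf_gt0.
Qed.

Theorem lemma3 (R : realFieldType) (n x : nat) (tr : tie_rule)
  (p : 'I_n -> 'I_x.+1 -> R) (s : profile n x) :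
  (2 <= n)%N -> full_support_dists p -> equilibrium tr p s ->
  forall (i : 'I_n) (v v' : 'I_x.+1),
    (nat_of_ord v < nat_of_ord v')%N -> (nat_of_ord (s i v) <= nat_of_ord (s i v'))%N.
Proof.
move=> hn hp heq i v v' hvv'; rewrite leqNgt; apply/negP => hlt.
have h0 := zero_bid hp heq.
have E : payoff tr p s i = payoff tr p (upd s i (s i)) i.
  congr payoff; apply: functional_extensionality => k; rewrite /upd.
  by case: (eqVneq k i) => [->|].
have BR : forall u c, ((nat_of_ord u)%:R - (nat_of_ord c)%:R) * Qf tr p s i u c <=
    ((nat_of_ord u)%:R - (nat_of_ord (s i u))%:R) * Qf tr p s i u (s i u).
  move=> u c; have := (heq i).1 (fun z => if z == u then c else s i z).
  rewrite E !(payoff_split _ _ _ _ _ u) eqxx.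
  have -> : Af tr p s i (fun z => if z == u then c else s i z) u = Af tr p s i (s i) u.
    by apply: Af_ext => z /negbTE ->.
  by rewrite lerD2l.
have B1 := BR v (s i v').
have B2 := BR v' (s i v).
have S1 := Qf_scale tr p s i v v' (s i v).
have S2 := Qf_scale tr p s i v v' (s i v').
have M : Qf tr p s i v (s i v') <= Qf tr p s i v (s i v) by apply: Qf_mono.
have P0 : 0 < Qf tr p s i v (s i v) by apply: Qf_gt0 => //; exact: leq_ltn_trans hlt.
have a0 : 0 < p i v by case: hp.
have a1 : 0 < p i v' by case: hp.
have hV : ((nat_of_ord v)%:R : R) < (nat_of_ord v')%:R by rewrite ltr_nat.
have hB : ((nat_of_ord (s i v'))%:R : R) < (nat_of_ord (s i v))%:R by rewrite ltr_nat.
move: B1 B2 S1 S2 M P0 a0 a1 hV hB.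
set V := ((nat_of_ord v)%:R : R); set V' := ((nat_of_ord v')%:R : R).
set B := ((nat_of_ord (s i v))%:R : R); set B' := ((nat_of_ord (s i v'))%:R : R).
set P := Qf tr p s i v (s i v); set P' := Qf tr p s i v (s i v').
set Q := Qf tr p s i v' (s i v); set Q' := Qf tr p s i v' (s i v').
set a := p i v; set a' := p i v'.
move=> B1 B2 S1 S2 M P0 a0 a1 hV hB.
have B2' : (V' - B) * P <= (V' - B') * P'.
  have : (V' - B) * Q * a <= (V' - B') * Q' * a by rewrite ler_wpM2r // ltW.
  rewrite -!mulrA S1 S2 !mulrA => H.
  by rewrite -(ler_pM2r a1).
have H1 : (V' - V) * P <= (V' - V) * P' by lra.
have H2 : P <= P' by rewrite -(ler_pM2l (x:=V' - V)) // subr_gt0.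
have H3 : P' = P by apply/eqP; rewrite eq_le M H2.
rewrite H3 in B1.
have H4 : 0 < (B - B') * P by apply: mulr_gt0 => //; rewrite subr_gt0.
lra.
Qed.
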